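(* Fix $\beta>1$ and let $(D_n)_{n\geq1}$ be a sequence of non-empty finite sets of generalised $\beta$-digits. Let $k\geq3$ be odd, and suppose that $D_n=D_k$ for every odd $n>k$ and $D_n=\{0\}$ for every other $n>1$. With $\ell_n,u_n$ the least and greatest elements of $D_n$, $\Delta_n=u_n-\ell_n$, and $\delta_n$ the largest gap between consecutive elements of $D_n$ ($\delta_n=0$ if $|D_n|=1$), the family of inequalities $$\delta_n\leq\sum_{i=1}^{\infty}\Delta_{n+i}\,\beta^{-i}\qquad(n\geq1)$$ is equivalent to the pair of inequalities $$(\beta^2-1)\,\delta_k\leq\Delta_k\qquad\text{and}\qquad(\beta^{k-1}-\beta^{k-3})\,\delta_1\leq\Delta_k.$$
   Context: A generalised $\beta$-digit is a string $c_0.c_1\ldots c_k$ of non-negative integers, with value $\sum_{i=0}^k c_i\beta^{-i}$ (an ordinary non-negative integer is a generalised digit of length 1). Least/greatest elements and gaps are taken with respect to these values. *)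

(* Defs.v *)
From HB Require Import structures.
From mathcomp Require Import all_boot all_order all_algebra.
From mathcomp Require Import finmap.
From mathcomp Require Import all_classical all_reals all_analysis.
Set Implicit Arguments. Unset Strict Implicit. Unset Printing Implicit Defensive.
Import Order.TTheory GRing.Theory Num.Theory.
Local Open Scope ring_scope.
Local Open Scope fset_scope.

(* A generalised beta-digit c_0.c_1...c_k is encoded as the pair
   (c_0, [:: c_1; ...; c_k]) of non-negative integers (length >= 1). *)
Definition gdigit := (nat * seq nat)%type.

Definition gzero : gdigit := (0%N, [::]).

Definition dval (R : realType) (beta : R) (d : gdigit) : R :=
  (d.1)%:R + \sum_(i < size d.2) (nth 0%N d.2 i)%:R / beta ^+ i.+1.

Definition vals (R : realType) (beta : R) (A : {fset gdigit}) : seq R :=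
  sort <=%R (undup [seq dval beta d | d <- enum_fset A]).

Definition lowd (R : realType) (beta : R) (A : {fset gdigit}) : R :=
  head 0 (vals beta A).
Definition uppd (R : realType) (beta : R) (A : {fset gdigit}) : R :=
  last 0 (vals beta A).
Definition Deltad (R : realType) (beta : R) (A : {fset gdigit}) : R :=
  uppd beta A - lowd beta A.

Definition deltad (R : realType) (beta : R) (A : {fset gdigit}) : R :=
  let s := vals beta A in
  \big[Num.max/0]_(p <- zip s (behead s)) (p.2 - p.1).

Definition infsum (R : realType) (a : nat -> R) : R :=
  limn (fun N => \sum_(0 <= i < N) a i).

(* Main.v *)
Require Import Defs.
From HB Require Import structures.
From mathcomp Require Import all_boot all_order all_algebra.
From mathcomp Require Import finmap.
From mathcomp Require Import all_classical all_reals all_analysis.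
From mathcomp Require Import ring lra zify.
Import numFieldNormedType.Exports.
Import Order.TTheory GRing.Theory Num.Theory.
Local Open Scope ring_scope.
Local Open Scope fset_scope.

Section S.
Local Close Scope fset_scope.
Local Open Scope classical_set_scope.
Variable R : realType.
Lemma vals0 (beta : R) : vals beta [fset gzero]%fset = [:: 0].
Proof.
rewrite /vals -fset_seq1 /= /dval /= big_ord0 addr0. by [].
Qed.

Lemma Deltad0 (beta : R) : Deltad beta [fset gzero]%fset = 0.
Proof. by rewrite /Deltad /uppd /lowd vals0 /= subrr. Qed.

Lemma deltad0 (beta : R) : deltad beta [fset gzero]%fset = 0.
Proof. by rewrite /deltad vals0 /= big_nil. Qed.

Lemma deltad_ge0 (beta : R) A : 0 <= deltad beta A.
Proof.
rewrite /deltad; apply: (big_rec (fun x => 0 <= x)) => // i x _ hx.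
by rewrite le_max hx orbT.
Qed.

Lemma Deltad_ge0 (beta : R) A : 0 <= Deltad beta A.
Proof.
rewrite /Deltad /uppd /lowd subr_ge0.
have : sorted <=%R (vals beta A) by apply: sort_sorted; exact: le_total.
case: (vals beta A) => [|x s] //= hs.
have := order_path_min (@le_trans _ R) hs => /allP H.
have := mem_last x s; rewrite inE => /orP[/eqP -> //|/H //].
Qed.

Lemma geo_bound (r : R) N : 0 <= r < 1 ->
  \sum_(0 <= i < N) r ^+ i <= (1 - r)^-1.
Proof.
move=> /andP[r0 r1]; have h1r : 0 < 1 - r by rewrite subr_gt0.
elim: N => [|N IH]; first by rewrite big_geq // invr_ge0 ltW.
rewrite big_nat_recl // expr0.
under eq_bigr => i _ do rewrite exprS.
rewrite -mulr_sumr.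
have : r * \sum_(0 <= i < N) r ^+ i <= r * (1 - r)^-1 by rewrite ler_wpM2l.
move=> H; rewrite -(lerD2l 1) in H; apply: le_trans H _.
have hne : 1 - r != 0 by rewrite lt0r_neq0.
suff -> : 1 + r * (1 - r)^-1 = (1 - r)^-1 by [].
by field.
Qed.

Lemma psum_nd (a : nat -> R) : (forall i, 0 <= a i) ->
  nondecreasing_seq (fun N => \sum_(0 <= i < N) a i).
Proof.
move=> a0 m n mn; rewrite (big_cat_nat (leq0n m) mn) /= lerDl.
by apply: sumr_ge0.
Qed.

Lemma psum_cvg (a : nat -> R) (C r : R) : 0 <= r < 1 ->
  (forall i, 0 <= a i <= C * r ^+ i) ->
  cvgn (fun N => \sum_(0 <= i < N) a i).
Proof.
move=> hr ha; apply: nondecreasing_is_cvgn.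
  by apply: psum_nd => i; case/andP: (ha i).
exists (C * (1 - r)^-1) => _ [N _ <-].
have C0 : 0 <= C.
  by case/andP: (ha 0%N) => h1; rewrite expr0 mulr1; exact: le_trans.
apply: (@le_trans _ _ (\sum_(0 <= i < N) C * r ^+ i)).
  by apply: ler_sum => i _; case/andP: (ha i).
by rewrite -mulr_sumr ler_wpM2l // geo_bound.
Qed.

Lemma psum_lim_ge0 (a : nat -> R) (C r : R) : 0 <= r < 1 ->
  (forall i, 0 <= a i <= C * r ^+ i) ->
  0 <= infsum a.
Proof.
move=> hr ha; rewrite /infsum; apply: limr_ge; first exact: psum_cvg hr ha.
apply: nearW => N; apply: sumr_ge0 => i _; by case/andP: (ha i).
Qed.

Definition hh (beta : R) (m i : nat) : R :=
  if ~~ odd i && (m <= i)%N then (beta ^+ i)^-1 else 0.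

Lemma hh_rec (beta : R) m N : beta != 0 ->
  hh beta m (N + m).+2 = (beta ^+ 2)^-1 * hh beta m (N + m).
Proof.
move=> b0; rewrite /hh /= negbK leq_addl.
have -> : (m <= (N + m).+2)%N.
  by apply: leq_trans (leq_addl N m) _; apply: leq_trans (leqnSn _) (leqnSn _).
case: (odd (N + m)) => /=; first by rewrite mulr0.
by rewrite -addn2 exprD invfM mulrC.
Qed.

Lemma hh_cvg (beta : R) m : 1 < beta -> (2 <= m)%N -> ~~ odd m ->
  (fun N => \sum_(0 <= i < N) hh beta m i) @ \oo -->
     ((beta ^+ (m - 2)) * (beta ^+ 2 - 1))^-1.
Proof.
move=> b1 m2 me.
have b0 : 0 < beta by apply: lt_trans b1.
have bn0 : beta != 0 by rewrite gt_eqF.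
set H := fun N => _.
have hc : cvgn H.
  apply: (@psum_cvg _ 1 beta^-1).
    by rewrite invr_ge0 ltW //= invf_lt1.
  move=> i; rewrite mul1r exprVn /hh; case: ifP => _.
    by rewrite lexx andbT invr_ge0 exprn_ge0 // ltW.
  by rewrite lexx /= invr_ge0 exprn_ge0 // ltW.
set l := limn H.
have Hl : H @ \oo --> l by [].
set Q := fun N => H (N + m)%N.
have Hm : H m = 0.
  rewrite /H big_nat_cond big1 // => i /andP[/andP[_ hi] _].
  by rewrite /hh leqNgt hi andbF.
have Hs : forall n, H n.+1 = H n + hh beta m n.
  by move=> n; rewrite /H big_nat_recr.
have rec : forall N, Q N.+2 = (beta ^+ 2)^-1 * Q N + (beta ^+ m)^-1.
  elim=> [|N IH].
    rewrite /Q /= !add0n Hs Hs Hm add0r /hh me leqnn /=.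
    by rewrite me /= addr0 mulr0 add0r.
  have e1 : Q N.+3 = Q N.+2 + hh beta m (N + m).+2.
    by rewrite /Q !addSn Hs.
  have e2 : Q N.+1 = Q N + hh beta m (N + m).
    by rewrite /Q !addSn Hs.
  by rewrite e1 e2 IH hh_rec // mulrDr addrAC.
have Ql : Q @ \oo --> l by rewrite /Q cvg_shiftn.
have Q2l : (fun N => Q (N + 2)%N) @ \oo --> l by rewrite cvg_shiftn.
have Q2l' : (fun N => (beta ^+ 2)^-1 * Q N + (beta ^+ m)^-1) @ \oo -->
    (beta ^+ 2)^-1 * l + (beta ^+ m)^-1.
  apply: cvgD; first exact: cvgMl_tmp.
  exact: cvg_cst.
have el : l = (beta ^+ 2)^-1 * l + (beta ^+ m)^-1.
  have eqf : (fun N => Q (N + 2)%N) = (fun N => (beta ^+ 2)^-1 * Q N + (beta ^+ m)^-1).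
    by apply: funext => N; rewrite addn2 rec.
  rewrite eqf in Q2l.
  exact: (cvg_unique _ Q2l Q2l').
suff eL : l = ((beta ^+ (m - 2)) * (beta ^+ 2 - 1))^-1 by rewrite -eL.
have em : beta ^+ m = beta ^+ (m - 2) * beta ^+ 2 by rewrite -exprD subnK.
rewrite em in el.
have t0 : beta ^+ (m - 2) != 0 by rewrite expf_neq0.
have b21 : beta ^+ 2 - 1 != 0.
  by rewrite subr_eq0 gt_eqF // expr_gt1 ?(ltW b0).
move: el; set t := beta ^+ (m - 2); set b2 := beta ^+ 2 => el.
have b20 : b2 != 0 by rewrite expf_neq0.
have h : l * (1 - b2^-1) = (t * b2)^-1.
  rewrite mulrBr mulr1 {1}el; field; apply/andP; split => //.
have hb : 1 - b2^-1 != 0.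
  have -> : 1 - b2^-1 = (b2 - 1) / b2 by field.
  by rewrite mulf_neq0 // invr_eq0.
have hl : l = (t * b2)^-1 / (1 - b2^-1) by rewrite -h mulfK.
rewrite hl; field.
by rewrite t0 b20 b21.
Qed.

Lemma infsum_hh (beta : R) (a : nat -> R) (c : R) m : 1 < beta -> (2 <= m)%N ->
  ~~ odd m -> (forall i, a i = c * hh beta m i) ->
  infsum a = c * ((beta ^+ (m - 2)) * (beta ^+ 2 - 1))^-1.
Proof.
move=> b1 m2 me ha; rewrite /infsum.
have -> : (fun N => \sum_(0 <= i < N) a i) =
          (fun N => c * \sum_(0 <= i < N) hh beta m i).
  by apply: funext => N; rewrite mulr_sumr; apply: eq_bigr => i _; rewrite ha.
apply: cvg_lim => //; apply: cvgMl_tmp; exact: hh_cvg.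
Qed.
End S.

Theorem corollary2p3 (R : realType) (beta : R) (D : nat -> {fset gdigit})
    (k : nat) :
  1 < beta ->
  (forall n, (1 <= n)%N -> D n != fset0) ->
  (3 <= k)%N -> odd k ->
  (forall n, (k < n)%N -> odd n -> D n = D k) ->
  (forall n, (1 < n)%N -> n != k -> ~~ (odd n && (k < n)%N) ->
     D n = [fset gzero]) ->
  ((forall n, (1 <= n)%N ->
      deltad beta (D n) <=
      infsum (fun i => if i == 0%N then 0
                       else Deltad beta (D (n + i)%N) / beta ^+ i))
   <->
   ((beta ^+ 2 - 1) * deltad beta (D k) <= Deltad beta (D k) /\
    (beta ^+ (k - 1) - beta ^+ (k - 3)) * deltad beta (D 1%N)
      <= Deltad beta (D k))).
Proof.
move=> b1 _ k3 ko hodd hzero.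
have b0 : 0 < beta by apply: lt_trans b1.
have bn0 : beta != 0 by rewrite gt_eqF.
set Dl := Deltad beta (D k).
set dl := deltad beta (D k).
have Dj : forall j, (1 < j)%N ->
    D j = if odd j && (k <= j)%N then D k else [fset gzero].
  move=> j j1; case: (eqVneq j k) => [->|ne]; first by rewrite ko leqnn.
  case h: (odd j && (k <= j)%N).
    case/andP: h => oj kj; apply: hodd => //; by rewrite ltn_neqAle eq_sym ne.
  apply: hzero => //; apply/negP => /andP[oj kj].
  by move: h; rewrite oj (ltnW kj).
set a := fun n i => if i == 0%N then 0 else Deltad beta (D (n + i)%N) / beta ^+ i.
have ai : forall n i, (1 <= n)%N -> (0 < i)%N ->
    a n i = (if odd (n + i) && (k <= n + i)%N then Dl else 0) / beta ^+ i.
  move=> n i n1 i0; rewrite /a (negbTE (lt0n_neq0 i0)).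
  have ni : (1 < n + i)%N by rewrite -addn1 leq_add.
  by rewrite (Dj _ ni); case: ifP => // _; rewrite Deltad0.
have Dl0 : 0 <= Dl by apply: Deltad_ge0.
have L2 : forall n, (1 <= n)%N -> odd n -> (k <= n)%N ->
    infsum (a n) = Dl * ((beta ^+ (2 - 2)) * (beta ^+ 2 - 1))^-1.
  move=> n n1 no kn; apply: infsum_hh => // i.
  case: (posnP i) => [->|i0]; first by rewrite /a /hh /= mulr0.
  rewrite ai // oddD no /= (leq_trans kn (leq_addr _ _)) andbT /hh.
  case: (boolP (odd i)) => oi /=; first by rewrite mul0r mulr0.
  have -> : (2 <= i)%N by case: i i0 oi => [|[|i]].
  by [].
have L1 : infsum (a 1%N) = Dl * ((beta ^+ ((k - 1) - 2)) * (beta ^+ 2 - 1))^-1.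
  apply: infsum_hh => //.
  - by rewrite ltn_subRL.
  - by rewrite oddB ?ko // (leq_trans _ k3).
  move=> i; case: (posnP i) => [->|i0].
    by rewrite /a /hh /= leqn0 subn_eq0 leqNgt (leq_trans _ k3) /= ?mulr0.
  rewrite ai // oddD /= /hh.
  have -> : (k <= 1 + i)%N = (k - 1 <= i)%N by rewrite leq_subLR.
  case: (boolP (odd i)) => oi /=; first by rewrite mul0r mulr0.
  by case: (k - 1 <= i)%N; rewrite ?mul0r ?mulr0.
have t2 : (0 < beta ^+ 2 - 1)%R by rewrite subr_gt0 expr_gt1 // ltW.
have ek : (beta ^+ (k - 1) - beta ^+ (k - 3)) =
          beta ^+ ((k - 1) - 2) * (beta ^+ 2 - 1).
  have -> : ((k - 1) - 2 = k - 3)%N by rewrite -subnDA.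
  have -> : (k - 1 = (k - 3) + 2)%N by lia.
  by rewrite exprD mulrBr mulr1.
have tk : 0 < beta ^+ ((k - 1) - 2) by rewrite exprn_gt0.
split.
- move=> H; split.
  + have k1 : (1 <= k)%N by apply: leq_trans k3.
    have := H k k1; rewrite -/a -/dl L2 //.
    by rewrite subnn expr0 mul1r ler_pdivlMr // mulrC.
  + have := H 1%N isT; rewrite -/a L1 ek.
    by rewrite ler_pdivlMr ?mulr_gt0 // mulrC.
- case=> h1 h2 n n1.
  rewrite -/a.
  case: (eqVneq n 1%N) => [->|n1'].
    by rewrite L1 ler_pdivlMr ?mulr_gt0 // mulrC -ek.
  have n2 : (1 < n)%N by rewrite ltn_neqAle eq_sym n1' n1.
  rewrite (Dj _ n2); case: ifP => [/andP[no kn]|_].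
    by rewrite L2 // subnn expr0 mul1r ler_pdivlMr // mulrC.
  rewrite deltad0; apply: (@psum_lim_ge0 _ _ Dl beta^-1).
    by rewrite invr_ge0 ltW //= invf_lt1.
  move=> i; case: (posnP i) => [->|i0].
    by rewrite /a /= expr0 mulr1 lexx Dl0.
  have e := ai n i n1 i0; rewrite /a (negbTE (lt0n_neq0 i0)) in e.
  rewrite e exprVn; case: ifP => _.
    by rewrite lexx andbT divr_ge0 // exprn_ge0 // ltW.
  by rewrite mul0r lexx /= mulr_ge0 // invr_ge0 exprn_ge0 // ltW.
Qed.
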